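(* Let $\upsilon\in(0,1]$, $P_b>0$, $h>0$, $T>0$, $\sigma^2>0$, $B>0$, $L>0$. Define for $t>0$ $$S_{\mathrm{off}}(t)=\upsilon P_bhT+\left(\frac{\sigma^2}{h}-\upsilon P_bh\right)t-\frac{\sigma^2}{h}\,t\,2^{\frac{L}{Bt}}$$ and $$\rho(h)=\frac{\ln 2}{B\left[1+W\!\left(\frac{\upsilon P_bh^2}{\sigma^2e}-\frac1e\right)\right]},$$ where $W$ is the (principal branch of the) Lambert function, i.e. $W(x)e^{W(x)}=x$. Then $S_{\mathrm{off}}$ is a concave function on $(0,\infty)$ and it is maximized at $t=\rho(h)L$.
   Context: $S_{\mathrm{off}}(t)$ is the mobile energy savings when the offloading duration is $t$: the harvested energy $\upsilon P_bh(T-t)$ minus the transmission energy $(2^{L/(Bt)}-1)\frac{\sigma^2}{h}t$ for sending $L$ bits over bandwidth $B$ with channel gain $h$ and noise variance $\sigma^2$. *)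

(* Defs.v *)
From Stdlib Require Import Reals Lra ClassicalEpsilon.
Open Scope R_scope.

(* Principal branch of the Lambert W function: for x >= -1/e, the unique
   w >= -1 with w * exp w = x (chosen by Hilbert's epsilon; the value for
   x < -1/e is unspecified and never used here). *)
Definition LambertW (x : R) : R :=
  epsilon (inhabits 0) (fun w => -1 <= w /\ w * exp w = x).

Definition S_off (ups Pb h T sigma2 B L t : R) : R :=
  ups * Pb * h * T + (sigma2 / h - ups * Pb * h) * t
  - sigma2 / h * t * Rpower 2 (L / (B * t)).

Definition rho (ups Pb sigma2 B h : R) : R :=
  ln 2 / (B * (1 + LambertW (ups * Pb * h ^ 2 / (sigma2 * exp 1) - / exp 1))).

Definition concave_on_pos (f : R -> R) : Prop :=
  forall x y l, 0 < x -> 0 < y -> 0 <= l <= 1 ->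
    l * f x + (1 - l) * f y <= f (l * x + (1 - l) * y).

(* Main.v *)
Require Import Defs.
From Stdlib Require Import Reals Lra ClassicalEpsilon.
Open Scope R_scope.

Lemma key_tan (k t t0 : R) : 0 < t -> 0 < t0 ->
  t0 * exp (k/t0) + exp (k/t0) * (1 - k/t0) * (t - t0) <= t * exp (k/t).
Proof.
  intros Ht Ht0.
  assert (E : exp (k/t) = exp (k/t0) * exp (k/t - k/t0)).
  { rewrite <- exp_plus. f_equal. ring. }
  pose proof (exp_ineq1_le (k/t - k/t0)) as H1.
  pose proof (exp_pos (k/t0)) as Hp.
  rewrite E.
  assert (H2 : t * (exp (k / t0) * (1 + (k/t - k/t0))) <= t * (exp (k / t0) * exp (k / t - k / t0))).
  { apply Rmult_le_compat_l; [lra|]. apply Rmult_le_compat_l; lra. }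
  eapply Rle_trans; [|exact H2]. right. field. lra.
Qed.

Lemma S_off_exp ups Pb h T sigma2 B L t : 0 < B -> 0 < t ->
  S_off ups Pb h T sigma2 B L t =
  ups * Pb * h * T + (sigma2 / h - ups * Pb * h) * t
  - sigma2 / h * (t * exp ((L * ln 2 / B) / t)).
Proof.
  intros HB Ht. unfold S_off, Rpower.
  replace (L / (B * t) * ln 2) with (L * ln 2 / B / t) by (field; lra). ring.
Qed.

Lemma S_tan ups Pb h T sigma2 B L t t0 : 0 < h -> 0 < sigma2 -> 0 < B -> 0 < t -> 0 < t0 ->
  S_off ups Pb h T sigma2 B L t <= S_off ups Pb h T sigma2 B L t0 +
   ((sigma2 / h - ups * Pb * h) - sigma2 / h * (exp ((L * ln 2 / B)/t0) * (1 - (L * ln 2 / B)/t0))) * (t - t0).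
Proof.
  intros Hh Hs HB Ht Ht0.
  rewrite !S_off_exp by lra.
  pose proof (key_tan (L * ln 2 / B) t t0 Ht Ht0) as K.
  assert (Hc : 0 < sigma2 / h) by (apply Rdiv_lt_0_compat; lra).
  set (g := t * exp (L * ln 2 / B / t)) in *.
  set (e0 := exp (L * ln 2 / B / t0)) in *.
  set (u := L * ln 2 / B / t0) in *.
  assert (sigma2 / h * (t0 * e0 + e0 * (1 - u) * (t - t0)) <= sigma2/h * g)
    by (apply Rmult_le_compat_l; lra).
  nra.
Qed.

Lemma W_spec x : -/exp 1 < x -> -1 < LambertW x /\ LambertW x * exp (LambertW x) = x.
Proof.
  intros Hx.
  assert (Ex : exists w, -1 <= w /\ w * exp w = x).
  { set (M := Rabs x + 1).
    destruct (IVT (fun w => w * exp w - x) (-1) M) as [z [Hz1 Hz2]].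
    - reg.
    - unfold M; pose proof (Rabs_pos x); lra.
    - replace (-1 * exp (-1)) with (- / exp 1).
      + lra.
      + replace (exp (-1)) with (/ exp 1) by (rewrite <- exp_Ropp; f_equal; ring). ring.
    - unfold M. pose proof (Rabs_pos x). pose proof (Rle_abs x).
      assert (1 <= exp (Rabs x + 1)).
      { pose proof (exp_ineq1_le (Rabs x + 1)). lra. }
      nra.
    - exists z. split; lra. }
  unfold LambertW.
  destruct (epsilon_spec (inhabits 0) (fun w => -1 <= w /\ w * exp w = x) Ex) as [H1 H2].
  split; [|exact H2].
  destruct H1 as [H1|H1]; [exact H1|].
  exfalso. rewrite <- H1 in H2.
  replace (exp (-1)) with (/ exp 1) in H2 by (rewrite <- exp_Ropp; f_equal; ring). lra.
Qed.

Theorem lemma4 (ups Pb h T sigma2 B L : R)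
  (Hups : 0 < ups <= 1) (HPb : 0 < Pb) (Hh : 0 < h) (HT : 0 < T)
  (Hs : 0 < sigma2) (HB : 0 < B) (HL : 0 < L) :
  concave_on_pos (S_off ups Pb h T sigma2 B L) /\
  0 < rho ups Pb sigma2 B h * L /\
  (forall t, 0 < t ->
     S_off ups Pb h T sigma2 B L t
     <= S_off ups Pb h T sigma2 B L (rho ups Pb sigma2 B h * L)).
Proof.
  set (x := ups * Pb * h ^ 2 / (sigma2 * exp 1) - / exp 1).
  assert (Hx : - / exp 1 < x).
  { unfold x. assert (0 < ups * Pb * h ^ 2 / (sigma2 * exp 1)).
    { apply Rdiv_lt_0_compat. apply Rmult_lt_0_compat; [nra|]. apply pow_lt; lra.
      apply Rmult_lt_0_compat; [lra| apply exp_pos]. }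
    lra. }
  destruct (W_spec x Hx) as [HW1 HW2].
  assert (Hln : 0 < ln 2).
  { rewrite <- ln_1. apply ln_increasing; lra. }
  assert (Hr : 0 < rho ups Pb sigma2 B h * L).
  { unfold rho. fold x. apply Rmult_lt_0_compat; [|lra].
    apply Rdiv_lt_0_compat; [lra|]. apply Rmult_lt_0_compat; lra. }
  split; [|split].
  - intros x1 y l Hx1 Hy Hl.
    set (z := l * x1 + (1 - l) * y).
    assert (Hz : 0 < z).
    { unfold z. destruct (Req_dec l 0) as [->|Hl0]; [lra|].
      assert (0 < l * x1) by (apply Rmult_lt_0_compat; lra).
      assert (0 <= (1 - l) * y) by (apply Rmult_le_pos; lra). lra. }
    pose proof (S_tan ups Pb h T sigma2 B L x1 z Hh Hs HB Hx1 Hz) as A.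
    pose proof (S_tan ups Pb h T sigma2 B L y z Hh Hs HB Hy Hz) as C.
    set (D := (sigma2 / h - ups * Pb * h) - sigma2 / h * (exp ((L * ln 2 / B)/z) * (1 - (L * ln 2 / B)/z))) in *.
    set (Sx := S_off ups Pb h T sigma2 B L x1) in *.
    set (Sy := S_off ups Pb h T sigma2 B L y) in *.
    set (Sz := S_off ups Pb h T sigma2 B L z) in *.
    assert (l * Sx <= l * (Sz + D * (x1 - z))) by (apply Rmult_le_compat_l; lra).
    assert ((1-l) * Sy <= (1-l) * (Sz + D * (y - z))) by (apply Rmult_le_compat_l; lra).
    assert (E : l * (Sz + D * (x1 - z)) + (1-l) * (Sz + D * (y - z)) = Sz) by (unfold z; ring).
    lra.
  - exact Hr.
  - intros t Ht.
    pose proof (S_tan ups Pb h T sigma2 B L t _ Hh Hs HB Ht Hr) as A.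
    eapply Rle_trans; [exact A|].
    unfold rho in A |- *. fold x in A |- *.
    set (W := LambertW x) in *.
    replace (L * ln 2 / B / (ln 2 / (B * (1 + W)) * L)) with (1 + W) by (field; repeat split; lra).
    rewrite exp_plus.
    assert (E : exp 1 * exp W * (1 - (1 + W)) = - exp 1 * (W * exp W)) by ring.
    rewrite E, HW2. unfold x.
    right. field. split; [lra|]. pose proof (exp_pos 1). lra.
Qed.
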